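(* Let $\mathcal{C}$ be a finitely complete 2-category. Every $\mathcal{F}_{\mathrm{bof}}$-quotient map in $\mathcal{C}$ is an effective $\mathcal{F}_{\mathrm{bof}}$-quotient map.
   Context: All 2-categories are strict and all limits and colimits are strict $\mathbf{Cat}$-enriched (weighted) ones; finitely complete means having all finite weighted limits. Let $\mathcal{K}_{\mathrm{bof}}$ be the 2-category generated by objects $1,2$, morphisms $u,v\colon2\to1$ and 2-cells $\alpha,\beta\colon u\Rightarrow v$. The $\mathcal{F}_{\mathrm{bof}}$-kernel of $f\colon A\to B$ is the 2-functor $\mathcal{K}_{\mathrm{bof}}\to\mathcal{C}$ sending $1\mapsto A$ and $u,v,\alpha,\beta$ to the universal data $u,v\colon\mathrm{Eq}(f)\to A$, $\alpha,\beta\colon u\Rightarrow v$ with $f\alpha=f\beta$ (a finite weighted limit). The $\mathcal{F}_{\mathrm{bof}}$-quotient of $X\colon\mathcal{K}_{\mathrm{bof}}\to\mathcal{C}$ is, when it exists, the coequifier $e\colon X1\to Q$ of $X\alpha,X\beta$, universal in the 2-categorical sense among morphisms $e$ with $e\cdot X\alpha=e\cdot X\beta$. A morphism is an $\mathcal{F}_{\mathrm{bof}}$-quotient map if it is isomorphic in the arrow 2-category $\mathcal{C}^{\mathbf 2}$ to the $\mathcal{F}_{\mathrm{bof}}$-quotient of some $X$; it is effective if its $\mathcal{F}_{\mathrm{bof}}$-kernel has an $\mathcal{F}_{\mathrm{bof}}$-quotient and the canonical comparison from that quotient to $f$ is invertible. *)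

(* Defs.v *)
Definition tr {H : Type} (Cl : H -> H -> Type) {f f' g g' : H}
  (e1 : f = f') (e2 : g = g') (a : Cl f g) : Cl f' g' :=
  match e1 in _ = x return Cl x g' with
  | eq_refl => match e2 in _ = y return Cl f y with eq_refl => a end
  end.

(** * Strict 2-categories
    1-cells compose diagrammatically: [comp f g] is "g after f".
    2-cells compose vertically ([vcomp]) and are whiskered on the left
    ([lwh k a] = k·a : k;f => k;g) and on the right ([rwh a h] = a·h : f;h => g;h).
    A sesquicategory satisfying the interchange law is exactly a strict 2-category. *)
Record TwoCat := {
  ob : Type;
  hom : ob -> ob -> Type;
  cell : forall (A B : ob), hom A B -> hom A B -> Type;
  idm : forall A, hom A A;
  comp : forall A B C, hom A B -> hom B C -> hom A C;
  comp_assoc : forall A B C D (f : hom A B) (g : hom B C) (h : hom C D),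
      comp A C D (comp A B C f g) h = comp A B D f (comp B C D g h);
  comp_id_l : forall A B (f : hom A B), comp A A B (idm A) f = f;
  comp_id_r : forall A B (f : hom A B), comp A B B f (idm B) = f;
  id2 : forall A B (f : hom A B), cell A B f f;
  vcomp : forall A B (f g h : hom A B), cell A B f g -> cell A B g h -> cell A B f h;
  vcomp_assoc : forall A B (f g h k : hom A B) (a : cell A B f g) (b : cell A B g h)
      (c : cell A B h k),
      vcomp A B f h k (vcomp A B f g h a b) c = vcomp A B f g k a (vcomp A B g h k b c);
  vcomp_id_l : forall A B (f g : hom A B) (a : cell A B f g), vcomp A B f f g (id2 A B f) a = a;
  vcomp_id_r : forall A B (f g : hom A B) (a : cell A B f g), vcomp A B f g g a (id2 A B g) = a;
  lwh : forall X A B (k : hom X A) (f g : hom A B),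
      cell A B f g -> cell X B (comp X A B k f) (comp X A B k g);
  rwh : forall A B Y (f g : hom A B),
      cell A B f g -> forall h : hom B Y, cell A Y (comp A B Y f h) (comp A B Y g h);
  lwh_id2 : forall X A B (k : hom X A) (f : hom A B),
      lwh X A B k f f (id2 A B f) = id2 X B (comp X A B k f);
  lwh_vcomp : forall X A B (k : hom X A) (f g h : hom A B) (a : cell A B f g) (b : cell A B g h),
      lwh X A B k f h (vcomp A B f g h a b)
      = vcomp X B _ _ _ (lwh X A B k f g a) (lwh X A B k g h b);
  rwh_id2 : forall A B Y (f : hom A B) (h : hom B Y),
      rwh A B Y f f (id2 A B f) h = id2 A Y (comp A B Y f h);
  rwh_vcomp : forall A B Y (f g k : hom A B) (a : cell A B f g) (b : cell A B g k) (h : hom B Y),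
      rwh A B Y f k (vcomp A B f g k a b) h
      = vcomp A Y _ _ _ (rwh A B Y f g a h) (rwh A B Y g k b h);
  lwh_idm : forall A B (f g : hom A B) (a : cell A B f g),
      tr (cell A B) (comp_id_l A B f) (comp_id_l A B g) (lwh A A B (idm A) f g a) = a;
  rwh_idm : forall A B (f g : hom A B) (a : cell A B f g),
      tr (cell A B) (comp_id_r A B f) (comp_id_r A B g) (rwh A B B f g a (idm B)) = a;
  lwh_lwh : forall W X A B (k' : hom W X) (k : hom X A) (f g : hom A B) (a : cell A B f g),
      tr (cell W B) (comp_assoc W X A B k' k f) (comp_assoc W X A B k' k g)
         (lwh W A B (comp W X A k' k) f g a)
      = lwh W X B k' _ _ (lwh X A B k f g a);
  rwh_rwh : forall A B Y Z (f g : hom A B) (a : cell A B f g) (h : hom B Y) (h' : hom Y Z),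
      tr (cell A Z) (comp_assoc A B Y Z f h h') (comp_assoc A B Y Z g h h')
         (rwh A Y Z _ _ (rwh A B Y f g a h) h')
      = rwh A B Z f g a (comp B Y Z h h');
  lwh_rwh : forall X A B Y (k : hom X A) (f g : hom A B) (a : cell A B f g) (h : hom B Y),
      tr (cell X Y) (comp_assoc X A B Y k f h) (comp_assoc X A B Y k g h)
         (rwh X B Y _ _ (lwh X A B k f g a) h)
      = lwh X A Y k _ _ (rwh A B Y f g a h);
  interchange : forall A B C (f g : hom A B) (h k : hom B C) (a : cell A B f g) (b : cell B C h k),
      vcomp A C _ _ _ (rwh A B C f g a h) (lwh A B C g h k b)
      = vcomp A C _ _ _ (lwh A B C f h k b) (rwh A B C f g a k)
}.

Arguments hom {_} _ _.
Arguments cell {_ _ _} _ _.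
Arguments idm {_} _.
Arguments comp {_ _ _ _} _ _.
Arguments comp_assoc {_ _ _ _ _} _ _ _.
Arguments id2 {_ _ _} _.
Arguments vcomp {_ _ _ _ _ _} _ _.
Arguments lwh {_ _ _ _} _ {_ _} _.
Arguments rwh {_ _ _ _ _ _} _ _.

Section Limits.
Variable C : TwoCat.

Lemma eq_pre_assoc {X E A B : ob C} (m : hom X E) (e : hom E A) (f g : hom A B)
  (H : comp e f = comp e g) : comp (comp m e) f = comp (comp m e) g.
Proof. rewrite !comp_assoc, H; reflexivity. Qed.

Lemma eq_whisk_to {X I A B : ob C} (m : hom X I) (i : hom I A) (a : hom X A)
  (H : comp m i = a) (f : hom A B) : comp m (comp i f) = comp a f.
Proof. rewrite <- comp_assoc, H; reflexivity. Qed.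

Definition lwhA {X I A B : ob C} (m : hom X I) (i : hom I A) (f g : hom A B)
  (l : cell (comp i f) (comp i g)) : cell (comp (comp m i) f) (comp (comp m i) g) :=
  tr cell (eq_sym (comp_assoc m i f)) (eq_sym (comp_assoc m i g)) (lwh m l).

Definition is_iso {A B : ob C} (h : hom A B) : Prop :=
  exists h' : hom B A, comp h h' = idm A /\ comp h' h = idm B.

(** ** The finite weighted limits used to define finite completeness.
    Each is stated with its 1-dimensional and 2-dimensional universal property
    (i.e. strict Cat-enriched universality). *)

Definition is_terminal (T : ob C) : Prop :=
  (forall X : ob C, exists! t : hom X T, True) /\
  (forall (X : ob C) (t t' : hom X T), exists! th : cell t t', True).

Definition is_product {A B P : ob C} (p1 : hom P A) (p2 : hom P B) : Prop :=
  (forall (X : ob C) (a : hom X A) (b : hom X B),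
      exists! m : hom X P, comp m p1 = a /\ comp m p2 = b) /\
  (forall (X : ob C) (m m' : hom X P) (r : cell (comp m p1) (comp m' p1))
      (s : cell (comp m p2) (comp m' p2)),
      exists! th : cell m m', rwh th p1 = r /\ rwh th p2 = s).

Definition is_equalizer {E A B : ob C} (f g : hom A B) (e : hom E A)
  (H : comp e f = comp e g) : Prop :=
  (forall (X : ob C) (a : hom X A), comp a f = comp a g ->
      exists! m : hom X E, comp m e = a) /\
  (forall (X : ob C) (m m' : hom X E) (r : cell (comp m e) (comp m' e)),
      tr cell (eq_pre_assoc m e f g H) (eq_pre_assoc m' e f g H) (rwh r f) = rwh r g ->
      exists! th : cell m m', rwh th e = r).

Definition is_inserter {I A B : ob C} (f g : hom A B) (i : hom I A)
  (l : cell (comp i f) (comp i g)) : Prop :=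
  (forall (X : ob C) (a : hom X A) (s : cell (comp a f) (comp a g)),
      exists! m : hom X I, exists H : comp m i = a,
        tr cell (eq_whisk_to m i a H f) (eq_whisk_to m i a H g) (lwh m l) = s) /\
  (forall (X : ob C) (m m' : hom X I) (r : cell (comp m i) (comp m' i)),
      vcomp (lwhA m i f g l) (rwh r g) = vcomp (rwh r f) (lwhA m' i f g l) ->
      exists! th : cell m m', rwh th i = r).

Definition is_equifier {E A B : ob C} {f g : hom A B} (a b : cell f g) (e : hom E A) : Prop :=
  lwh e a = lwh e b /\
  (forall (X : ob C) (x : hom X A), lwh x a = lwh x b ->
      exists! m : hom X E, comp m e = x) /\
  (forall (X : ob C) (m m' : hom X E) (r : cell (comp m e) (comp m' e)),
      exists! th : cell m m', rwh th e = r).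

(** These are finite weighted limits and
    they generate all finite weighted limits (Street; Kelly, "Elementary
    observations on 2-categorical limits"), so this is the standard notion of a
    finitely complete 2-category. *)
Definition finitely_complete : Prop :=
  (exists T : ob C, is_terminal T) /\
  (forall A B : ob C, exists (P : ob C) (p1 : hom P A) (p2 : hom P B), is_product p1 p2) /\
  (forall (A B : ob C) (f g : hom A B), exists (E : ob C) (e : hom E A)
      (H : comp e f = comp e g), is_equalizer f g e H) /\
  (forall (A B : ob C) (f g : hom A B), exists (I : ob C) (i : hom I A)
      (l : cell (comp i f) (comp i g)), is_inserter f g i l) /\
  (forall (A B : ob C) (f g : hom A B) (a b : cell f g), exists (E : ob C) (e : hom E A),
      is_equifier a b e).

(** ** F_bof-kernels and F_bof-quotients.
    A 2-functor K_bof -> C is the same as data (X1, X2, u, v : X2 -> X1, a, b : u => v),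
    since K_bof is free on its generators. *)

Definition is_bof_kernel {A B E : ob C} (f : hom A B) (u v : hom E A) (a b : cell u v) : Prop :=
  rwh a f = rwh b f /\
  (forall (X : ob C) (x y : hom X A) (s t : cell x y), rwh s f = rwh t f ->
      exists! m : hom X E, exists (H1 : comp m u = x) (H2 : comp m v = y),
        tr cell H1 H2 (lwh m a) = s /\ tr cell H1 H2 (lwh m b) = t) /\
  (forall (X : ob C) (m m' : hom X E) (r : cell (comp m u) (comp m' u))
      (p : cell (comp m v) (comp m' v)),
      vcomp (lwh m a) p = vcomp r (lwh m' a) ->
      vcomp (lwh m b) p = vcomp r (lwh m' b) ->
      exists! th : cell m m', rwh th u = r /\ rwh th v = p).

Definition is_bof_quotient {X1 X2 Q : ob C} {u v : hom X2 X1} (a b : cell u v)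
  (e : hom X1 Q) : Prop :=
  rwh a e = rwh b e /\
  (forall (Y : ob C) (g : hom X1 Y), rwh a g = rwh b g ->
      exists! m : hom Q Y, comp e m = g) /\
  (forall (Y : ob C) (m m' : hom Q Y) (r : cell (comp e m) (comp e m')),
      exists! th : cell m m', lwh e th = r).

(** Isomorphism in the arrow 2-category C^2 (objects: 1-cells; 1-cells: strictly
    commuting squares): a commuting square whose two sides are invertible. *)
Definition arrow_iso {X1 Q A B : ob C} (e : hom X1 Q) (f : hom A B) : Prop :=
  exists (h : hom X1 A) (k : hom Q B), is_iso h /\ is_iso k /\ comp e k = comp h f.

Definition bof_quotient_map {A B : ob C} (f : hom A B) : Prop :=
  exists (X1 X2 Q : ob C) (u v : hom X2 X1) (a b : cell u v) (e : hom X1 Q),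
    is_bof_quotient a b e /\ arrow_iso e f.

Definition effective_bof {A B : ob C} (f : hom A B) : Prop :=
  (exists (E : ob C) (u v : hom E A) (a b : cell u v), is_bof_kernel f u v a b) /\
  (forall (E : ob C) (u v : hom E A) (a b : cell u v), is_bof_kernel f u v a b ->
     exists (Q : ob C) (q : hom A Q), is_bof_quotient a b q /\
       exists c : hom Q B, comp q c = f /\ is_iso c).

Definition effective_bof_quotient_map {A B : ob C} (f : hom A B) : Prop :=
  bof_quotient_map f /\ effective_bof f.

End Limits.

Arguments finitely_complete : clear implicits.

(* Main.v *)
Require Import Defs.
From Stdlib Require Import ProofIrrelevance.

Section S.
Variable C : TwoCat.

Definition heq {A B : ob C} {f g f' g' : hom A B} (a : cell f g) (b : cell f' g') : Prop :=
  exists (e1 : f = f') (e2 : g = g'), tr cell e1 e2 a = b.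

Lemma heq_refl {A B : ob C} {f g : hom A B} (a : cell f g) : heq a a.
Proof. exists eq_refl, eq_refl. reflexivity. Qed.

Lemma heq_sym {A B : ob C} {f g f' g' : hom A B} (a : cell f g) (b : cell f' g') :
  heq a b -> heq b a.
Proof. intros [e1 [e2 H]]. destruct e1, e2. subst. apply heq_refl. Qed.

Lemma heq_trans {A B : ob C} {f g f1 g1 f2 g2 : hom A B} (a : cell f g) (b : cell f1 g1)
  (c : cell f2 g2) : heq a b -> heq b c -> heq a c.
Proof. intros [e1 [e2 H]] [e3 [e4 H']]. destruct e1, e2, e3, e4. subst. apply heq_refl. Qed.

Lemma heq_eq {A B : ob C} {f g : hom A B} (a b : cell f g) : heq a b -> a = b.
Proof.
  intros [e1 [e2 H]].
  rewrite (proof_irrelevance _ e1 eq_refl), (proof_irrelevance _ e2 eq_refl) in H. exact H.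
Qed.

Lemma heq_tr {A B : ob C} {f g f' g' : hom A B} (e1 : f = f') (e2 : g = g') (a : cell f g)
  (b : cell f' g') : heq a b -> tr cell e1 e2 a = b.
Proof.
  intros [e1' [e2' H]].
  rewrite (proof_irrelevance _ e1 e1'), (proof_irrelevance _ e2 e2'). exact H.
Qed.

Lemma tr_heq {A B : ob C} {f g f' g' : hom A B} (e1 : f = f') (e2 : g = g') (a : cell f g) :
  heq a (tr cell e1 e2 a).
Proof. exists e1, e2. reflexivity. Qed.

Lemma heq_l {A B : ob C} {f g f' g' : hom A B} (a : cell f g) (b : cell f' g') :
  heq a b -> f = f'.
Proof. intros [e1 _]. exact e1. Qed.

Lemma heq_r {A B : ob C} {f g f' g' : hom A B} (a : cell f g) (b : cell f' g') :
  heq a b -> g = g'.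
Proof. intros [_ [e2 _]]. exact e2. Qed.

Lemma heq2_intro {A B : ob C} {f g f' g' : hom A B} (a b : cell f g) (s t : cell f' g') :
  heq a s -> heq b t ->
  exists (H1 : f = f') (H2 : g = g'), tr cell H1 H2 a = s /\ tr cell H1 H2 b = t.
Proof. intros [H1 [H2 Ha]] Hb. exists H1, H2. split; [exact Ha | apply heq_tr; exact Hb]. Qed.

Lemma lwh_heq {X A B : ob C} (k : hom X A) {f g f' g' : hom A B} (a : cell f g)
  (b : cell f' g') : heq a b -> heq (lwh k a) (lwh k b).
Proof. intros [e1 [e2 H]]. destruct e1, e2. subst. apply heq_refl. Qed.

Lemma rwh_heq {A B Y : ob C} {f g f' g' : hom A B} (a : cell f g)
  (b : cell f' g') (h : hom B Y) : heq a b -> heq (rwh a h) (rwh b h).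
Proof. intros [e1 [e2 H]]. destruct e1, e2. subst. apply heq_refl. Qed.

Lemma vcomp_heq {A B : ob C} {f g h f' g' h' : hom A B} (a : cell f g) (b : cell g h)
  (a' : cell f' g') (b' : cell g' h') : heq a a' -> heq b b' -> heq (vcomp a b) (vcomp a' b').
Proof.
  intros [e1 [e2 H1]] [e3 [e4 H2]]. destruct e1, e2, e4.
  rewrite (proof_irrelevance _ e3 eq_refl) in H2. subst. apply heq_refl.
Qed.

Lemma lwh_heq_l {X A B : ob C} (k k' : hom X A) (E : k = k') {f g : hom A B} (a : cell f g) :
  heq (lwh k a) (lwh k' a).
Proof. subst. apply heq_refl. Qed.

Lemma rwh_heq_r {A B Y : ob C} {f g : hom A B} (a : cell f g) (h h' : hom B Y) (E : h = h') :
  heq (rwh a h) (rwh a h').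
Proof. subst. apply heq_refl. Qed.

Lemma lwh_lwh_h {W X A B : ob C} (k' : hom W X) (k : hom X A) {f g : hom A B} (a : cell f g) :
  heq (lwh (comp k' k) a) (lwh k' (lwh k a)).
Proof. eexists; eexists; apply lwh_lwh. Qed.

Lemma rwh_rwh_h {A B Y Z : ob C} {f g : hom A B} (a : cell f g) (h : hom B Y) (h' : hom Y Z) :
  heq (rwh (rwh a h) h') (rwh a (comp h h')).
Proof. eexists; eexists; apply rwh_rwh. Qed.

Lemma lwh_rwh_h {X A B Y : ob C} (k : hom X A) {f g : hom A B} (a : cell f g) (h : hom B Y) :
  heq (rwh (lwh k a) h) (lwh k (rwh a h)).
Proof. eexists; eexists; apply lwh_rwh. Qed.

Lemma lwh_idm_h {A B : ob C} {f g : hom A B} (a : cell f g) : heq (lwh (idm A) a) a.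
Proof. eexists; eexists; apply lwh_idm. Qed.

Lemma lwh_iso_inj {X A B : ob C} (h : hom X A) (h' : hom A X) (H : comp h' h = idm A)
  {f g f' g' : hom A B} (c1 : cell f g) (c2 : cell f' g') :
  heq (lwh h c1) (lwh h c2) -> heq c1 c2.
Proof.
  intro E.
  assert (L : forall (f g : hom A B) (c : cell f g), heq c (lwh h' (lwh h c))).
  { intros. eapply heq_trans. eapply heq_sym, lwh_idm_h.
    eapply heq_trans. eapply lwh_heq_l, eq_sym, H. apply lwh_lwh_h. }
  eapply heq_trans. apply L. eapply heq_trans. eapply lwh_heq, E. eapply heq_sym, L.
Qed.

Lemma kernel_of_data {A B : ob C} (f : hom A B) {P : ob C} (p1 p2 : hom P A)
  (HP : is_product C p1 p2) {I : ob C} (i : hom I P) (l : cell (comp i p1) (comp i p2))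
  (HI : is_inserter C p1 p2 i l) {J : ob C} (j : hom J I)
  (l2 : cell (comp j (comp i p1)) (comp j (comp i p2)))
  (HJ : is_inserter C (comp i p1) (comp i p2) j l2)
  (sg ta : cell (comp (comp j i) p1) (comp (comp j i) p2))
  (Hsg : heq (lwh j l) sg) (Hta : heq l2 ta) {E : ob C} (e : hom E J)
  (HE : is_equifier C (rwh sg f) (rwh ta f) e) :
  is_bof_kernel C f (comp e (comp (comp j i) p1)) (comp e (comp (comp j i) p2))
    (lwh e sg) (lwh e ta).
Proof.
  destruct HP as [HP1 HP2]. destruct HI as [HI1 HI2]. destruct HJ as [HJ1 HJ2].
  destruct HE as [HE0 [HE1 HE2]].
  split; [|split].
  - apply heq_eq. eapply heq_trans; [apply lwh_rwh_h|]. rewrite HE0. eapply heq_sym, lwh_rwh_h.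
  - intros X x y s t Hst.
    destruct (HP1 X x y) as [n [[Hn1 Hn2] Hnu]].
    pose (s' := tr cell (eq_sym Hn1) (eq_sym Hn2) s).
    destruct (HI1 X n s') as [m1 [[H1 Hm1] Hm1u]].
    assert (Ex : comp m1 (comp i p1) = x) by (rewrite <- comp_assoc, H1; exact Hn1).
    assert (Ey : comp m1 (comp i p2) = y) by (rewrite <- comp_assoc, H1; exact Hn2).
    pose (t' := tr cell (eq_sym Ex) (eq_sym Ey) t).
    destruct (HJ1 X m1 t') as [m2 [[H2 Hm2] Hm2u]].
    assert (Hm1s : heq (lwh m1 l) s).
    { eapply heq_trans. eexists; eexists; exact Hm1. eapply heq_sym, tr_heq. }
    assert (Hm2t : heq (lwh m2 l2) t).
    { eapply heq_trans. eexists; eexists; exact Hm2. eapply heq_sym, tr_heq. }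
    assert (Hm2s : heq (lwh m2 sg) s).
    { eapply heq_trans. eapply lwh_heq, heq_sym, Hsg.
      eapply heq_trans. eapply heq_sym, lwh_lwh_h.
      eapply heq_trans. eapply lwh_heq_l, H2. exact Hm1s. }
    assert (Hm2t' : heq (lwh m2 ta) t).
    { eapply heq_trans. eapply lwh_heq, heq_sym, Hta. exact Hm2t. }
    assert (Heq2 : lwh m2 (rwh sg f) = lwh m2 (rwh ta f)).
    { apply heq_eq. eapply heq_trans. eapply heq_sym, lwh_rwh_h.
      eapply heq_trans. eapply rwh_heq, Hm2s. rewrite Hst.
      eapply heq_trans. eapply rwh_heq, heq_sym, Hm2t'. apply lwh_rwh_h. }
    destruct (HE1 X m2 Heq2) as [m3 [H3 Hm3u]].
    exists m3. split.
    + apply heq2_intro.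
      * eapply heq_trans. eapply heq_sym, lwh_lwh_h. eapply heq_trans. eapply lwh_heq_l, H3.
        exact Hm2s.
      * eapply heq_trans. eapply heq_sym, lwh_lwh_h. eapply heq_trans. eapply lwh_heq_l, H3.
        exact Hm2t'.
    + intros q [Q1 [Q2 [Qs Qt]]].
      assert (Hqs : heq (lwh (comp q e) sg) s).
      { eapply heq_trans. apply lwh_lwh_h. eexists; eexists; exact Qs. }
      assert (Hqt : heq (lwh (comp q e) ta) t).
      { eapply heq_trans. apply lwh_lwh_h. eexists; eexists; exact Qt. }
      assert (Hqjs : heq (lwh (comp (comp q e) j) l) s).
      { eapply heq_trans. apply lwh_lwh_h. eapply heq_trans. eapply lwh_heq, Hsg. exact Hqs. }
      assert (Hqjt : heq (lwh (comp q e) l2) t).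
      { eapply heq_trans. eapply lwh_heq, Hta. exact Hqt. }
      assert (En : n = comp (comp (comp q e) j) i).
      { apply Hnu. split.
        - rewrite <- (heq_l _ _ Hqjs). apply comp_assoc.
        - rewrite <- (heq_r _ _ Hqjs). apply comp_assoc. }
      assert (E1 : m1 = comp (comp q e) j).
      { apply Hm1u. exists (eq_sym En). apply heq_tr. eapply heq_trans. exact Hqjs.
        apply tr_heq. }
      assert (E2 : m2 = comp q e).
      { apply Hm2u. exists (eq_sym E1). apply heq_tr. eapply heq_trans. exact Hqjt.
        apply tr_heq. }
      apply Hm3u. symmetry; exact E2.
  - intros X m m' r p Ha Hb.
    assert (Er1 : forall q : hom X E, comp q (comp e (comp (comp j i) p1))
                    = comp (comp (comp (comp q e) j) i) p1)
      by (intros; rewrite !comp_assoc; reflexivity).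
    assert (Er2 : forall q : hom X E, comp q (comp e (comp (comp j i) p2))
                    = comp (comp (comp (comp q e) j) i) p2)
      by (intros; rewrite !comp_assoc; reflexivity).
    destruct (HP2 X _ _ (tr cell (Er1 m) (Er1 m') r) (tr cell (Er2 m) (Er2 m') p))
      as [th1 [[Ht1a Ht1b] Ht1u]].
    assert (Hth1p : heq (rwh th1 p2) p). { rewrite Ht1b. eapply heq_sym, tr_heq. }
    assert (Hth1r : heq (rwh th1 p1) r). { rewrite Ht1a. eapply heq_sym, tr_heq. }
    assert (Cond1 : vcomp (lwhA C (comp (comp m e) j) i p1 p2 l) (rwh th1 p2)
                    = vcomp (rwh th1 p1) (lwhA C (comp (comp m' e) j) i p1 p2 l)).
    { apply heq_eq.
      assert (L : forall q : hom X E,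
                 heq (lwhA C (comp (comp q e) j) i p1 p2 l) (lwh q (lwh e sg))).
      { intro q. unfold lwhA. eapply heq_trans. eapply heq_sym, tr_heq.
        eapply heq_trans. apply lwh_lwh_h. eapply heq_trans. eapply lwh_heq, Hsg.
        apply lwh_lwh_h. }
      eapply heq_trans. eapply vcomp_heq. apply L. exact Hth1p. rewrite Ha.
      eapply heq_sym, vcomp_heq. exact Hth1r. apply L. }
    destruct (HI2 X _ _ th1 Cond1) as [th2 [Ht2 Ht2u]].
    assert (R1 : heq (rwh th2 (comp i p1)) r).
    { eapply heq_trans. eapply heq_sym, rwh_rwh_h. rewrite Ht2. exact Hth1r. }
    assert (R2 : heq (rwh th2 (comp i p2)) p).
    { eapply heq_trans. eapply heq_sym, rwh_rwh_h. rewrite Ht2. exact Hth1p. }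
    assert (Cond2 : vcomp (lwhA C (comp m e) j (comp i p1) (comp i p2) l2)
                      (rwh th2 (comp i p2))
                    = vcomp (rwh th2 (comp i p1))
                      (lwhA C (comp m' e) j (comp i p1) (comp i p2) l2)).
    { apply heq_eq.
      assert (L : forall q : hom X E,
                 heq (lwhA C (comp q e) j (comp i p1) (comp i p2) l2) (lwh q (lwh e ta))).
      { intro q. unfold lwhA. eapply heq_trans. eapply heq_sym, tr_heq.
        eapply heq_trans. eapply lwh_heq, Hta. apply lwh_lwh_h. }
      eapply heq_trans. eapply vcomp_heq. apply L. exact R2. rewrite Hb.
      eapply heq_sym, vcomp_heq. exact R1. apply L. }
    destruct (HJ2 X _ _ th2 Cond2) as [th3 [Ht3 Ht3u]].
    destruct (HE2 X m m' th3) as [th [Hth Hthu]].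
    assert (R4 : forall (q : hom P A) (f1 f2 : hom X E) (z : cell f1 f2),
               heq (rwh (rwh (rwh (rwh z e) j) i) q) (rwh z (comp e (comp (comp j i) q)))).
    { intros. eapply heq_trans. apply rwh_rwh_h. eapply heq_trans. apply rwh_rwh_h.
      eapply heq_trans. apply rwh_rwh_h. eapply rwh_heq_r. rewrite !comp_assoc. reflexivity. }
    exists th. split.
    + split; apply heq_eq; (eapply heq_trans; [eapply heq_sym, R4|]);
        rewrite Hth, Ht3, Ht2; assumption.
    + intros th' [Hθ1 Hθ2].
      apply Hthu. symmetry. apply Ht3u. symmetry. apply Ht2u. symmetry. apply Ht1u.
      split; apply heq_eq; (eapply heq_trans; [apply R4|]).
      * rewrite Hθ1. apply tr_heq.
      * rewrite Hθ2. apply tr_heq.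
Qed.

Lemma quotient_of_kernel {X1 X2 Q : ob C} (u0 v0 : hom X2 X1) (a b : cell u0 v0) (e : hom X1 Q)
  (Hq : is_bof_quotient C a b e) {A B : ob C} (f : hom A B) (h : hom X1 A) (h' : hom A X1)
  (k : hom Q B) (k' : hom B Q) (Hh'h : comp h' h = idm A) (Hkk' : comp k k' = idm Q)
  (Hk'k : comp k' k = idm B) (Hek : comp e k = comp h f)
  {E : ob C} (u v : hom E A) (al be : cell u v) (Hk : is_bof_kernel C f u v al be) :
  is_bof_quotient C al be f.
Proof.
  destruct Hq as [Hq0 [Hq1 Hq2]]. destruct Hk as [Hk0 [Hk1 Hk2]].
  split; [exact Hk0|split].
  - intros Y g Hg.
    assert (Hs : rwh (rwh a h) f = rwh (rwh b h) f).
    { apply heq_eq. eapply heq_trans. apply rwh_rwh_h.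
      eapply heq_trans. eapply rwh_heq_r, eq_sym, Hek.
      eapply heq_trans. eapply heq_sym, rwh_rwh_h. rewrite Hq0.
      eapply heq_trans. apply rwh_rwh_h. eapply heq_trans. eapply rwh_heq_r, Hek.
      eapply heq_sym, rwh_rwh_h. }
    destruct (Hk1 X2 _ _ _ _ Hs) as [n [[H1 [H2 [Hn1 Hn2]]] _]].
    assert (Hg' : rwh a (comp h g) = rwh b (comp h g)).
    { apply heq_eq. eapply heq_trans. eapply heq_sym, rwh_rwh_h.
      eapply heq_trans. eapply rwh_heq. eapply heq_sym. exists H1, H2. exact Hn1.
      eapply heq_trans. apply lwh_rwh_h. rewrite Hg.
      eapply heq_trans. eapply heq_sym, lwh_rwh_h.
      eapply heq_trans. eapply rwh_heq. exists H1, H2. exact Hn2. apply rwh_rwh_h. }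
    destruct (Hq1 Y (comp h g) Hg') as [m0 [Hm0 Hm0u]].
    exists (comp k' m0). split.
    + assert (Ef : f = comp h' (comp e k))
        by (rewrite Hek, <- comp_assoc, Hh'h, comp_id_l; reflexivity).
      rewrite Ef, !comp_assoc, <- (comp_assoc k k' m0), Hkk', comp_id_l, Hm0,
        <- comp_assoc, Hh'h, comp_id_l. reflexivity.
    + intros m1 Hm1.
      assert (E0 : m0 = comp k m1).
      { apply Hm0u. rewrite <- comp_assoc, Hek, comp_assoc, Hm1. reflexivity. }
      rewrite E0, <- comp_assoc, Hk'k, comp_id_l. reflexivity.
  - intros Y m m' r.
    assert (E1 : forall z : hom B Y, comp h (comp f z) = comp e (comp k z))
      by (intro z; rewrite <- !comp_assoc, Hek; reflexivity).
    destruct (Hq2 Y (comp k m) (comp k m') (tr cell (E1 m) (E1 m') (lwh h r)))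
      as [th0 [Hth0 Hth0u]].
    assert (F : forall z : hom B Y, comp k' (comp k z) = z)
      by (intro z; rewrite <- comp_assoc, Hk'k, comp_id_l; reflexivity).
    assert (Key : forall th : cell m m', heq (lwh h (lwh f th)) (lwh e (lwh k th))).
    { intro th. eapply heq_trans. eapply heq_sym, lwh_lwh_h.
      eapply heq_trans. eapply lwh_heq_l, eq_sym, Hek. apply lwh_lwh_h. }
    pose (th := tr cell (F m) (F m') (lwh k' th0)).
    assert (Hkth : lwh k th = th0).
    { apply heq_eq. eapply heq_trans. eapply lwh_heq, heq_sym, tr_heq.
      eapply heq_trans. eapply heq_sym, lwh_lwh_h. eapply heq_trans. eapply lwh_heq_l, Hkk'.
      apply lwh_idm_h. }
    exists th. split.
    + apply heq_eq. apply (lwh_iso_inj h h' Hh'h).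
      eapply heq_trans. apply Key. rewrite Hkth, Hth0. eapply heq_sym, tr_heq.
    + intros th' Hth'.
      assert (G1 : lwh e (lwh k th') = tr cell (E1 m) (E1 m') (lwh h r)).
      { apply heq_eq. eapply heq_trans. eapply heq_sym, Key. rewrite Hth'. apply tr_heq. }
      assert (G2 : lwh k th = lwh k th') by (rewrite Hkth; apply Hth0u, G1).
      apply heq_eq. apply (lwh_iso_inj k k' Hk'k). rewrite G2. apply heq_refl.
Qed.

End S.

Theorem proposition5p12 (C : TwoCat) (HC : finitely_complete C)
  (A B : ob C) (f : hom A B) :
  bof_quotient_map C f -> effective_bof_quotient_map C f.
Proof.
  intro Hq. split; [exact Hq|]. split.
  - destruct HC as [_ [Hprod [_ [Hins Heqf]]]].
    destruct (Hprod A A) as [P [p1 [p2 HP]]].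
    destruct (Hins P A p1 p2) as [I [i [l HI]]].
    destruct (Hins I A (comp i p1) (comp i p2)) as [J [j [l2 HJ]]].
    pose (sg := lwhA C j i p1 p2 l).
    pose (ta := tr cell (eq_sym (comp_assoc j i p1)) (eq_sym (comp_assoc j i p2)) l2).
    destruct (Heqf J B _ _ (rwh sg f) (rwh ta f)) as [E [e HE]].
    exists E. do 4 eexists.
    exact (kernel_of_data C f p1 p2 HP i l HI j l2 HJ sg ta (tr_heq C _ _ _) (tr_heq C _ _ _) e HE).
  - intros E u v al be Hk.
    destruct Hq as [X1 [X2 [Q [u0 [v0 [a [b [e [Hq [h [k [[h' [Hhh' Hh'h]] [[k' [Hkk' Hk'k]] Hek]]]]]]]]]]]]].
    exists B, f. split.
    + exact (quotient_of_kernel C u0 v0 a b e Hq f h h' k k' Hh'h Hkk' Hk'k Hek u v al be Hk).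
    + exists (idm B). split. apply comp_id_r. exists (idm B). split; apply comp_id_l.
Qed.
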